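(* Let $p$ be an odd prime, $n$ a positive integer, $N=p^n$, and $\omega_N=e^{2\pi\sqrt{-1}/N}$. For $1\le k\le n$ let $D_0^{(p^k)}$ (resp. $D_1^{(p^k)}$) be the set of nonzero squares (resp. non-squares) among the units of $\mathbb{Z}_{p^k}$, i.e. $D_i^{(p^k)}=\{g^{2t+i}\bmod p^k\mid t=0,\dots,\frac{(p-1)p^{k-1}}{2}-1\}$ for a primitive root $g$ modulo $p^n$. For $0\le m<k\le n$ and $i\in\{0,1\}$, regard $p^{m}D_i^{(p^{k})}=\{p^{m}x\bmod p^{m+k} : x\in D_i^{(p^k)}\}$, and in particular $p^{n-k}D_i^{(p^k)}$ and $p^mD_i^{(p^{n-m})}$ as subsets of $\mathbb{Z}_{p^n}$. Let $$C_1=\{0\}\cup\bigcup_{k=1}^{n}p^{n-k}D_1^{(p^k)}\subseteq\mathbb{Z}_{p^n},$$ and define the binary sequence $(s_i)$ of period $N$ by $s_i=1$ if $i\bmod N\in C_1$ and $s_i=0$ otherwise. Let $S(x)=\sum_{i=0}^{N-1}s_ix^i$. Let $\eta_i^{(p)}=\sum_{x\in D_i^{(p)}}e^{2\pi\sqrt{-1}x/p}$ for $i=0,1$. Then for $a\in\mathbb{Z}_{N}$: $$S(\omega_N^a)=\begin{cases}\frac{p^n+1}{2}, & a=0,\\[2pt] \frac{p^m+1}{2}+p^m\eta_1^{(p)}, & a\in p^mD_0^{(p^{n-m})},\ m\in\{0,1,\dots,n-1\},\\[2pt] \frac{p^m+1}{2}+p^m\eta_0^{(p)}, & a\in p^mD_1^{(p^{n-m})},\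 m\in\{0,1,\dots,n-1\}.\end{cases}$$
   Context: The sequence $(s_i)$ is the Ding–Helleseth generalized cyclotomic sequence of period $p^n$. The sets $\{0\}$, $p^{n-k}D_0^{(p^k)}$, $p^{n-k}D_1^{(p^k)}$ ($1\le k\le n$) partition $\mathbb{Z}_{p^n}$. *)

(* Defs.v *)
From HB Require Import structures.
From mathcomp Require Import all_boot all_order all_algebra.
From mathcomp Require Import reals trigo.
From mathcomp Require Import complex.
Set Implicit Arguments. Unset Strict Implicit. Unset Printing Implicit Defensive.
Import Order.TTheory GRing.Theory Num.Theory.

Definition is_sq_mod (q x : nat) : bool :=
  [exists y : 'I_q, (y ^ 2 == x %[mod q])%N].

Definition Dset (p k i x : nat) : bool :=
  [&& (x < p ^ k)%N, coprime x p &
      (if i == 0%N then is_sq_mod (p ^ k) x else ~~ is_sq_mod (p ^ k) x)].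

Definition inPD (p m k i a : nat) : bool :=
  [exists x : 'I_(p ^ k), Dset p k i x && (a == p ^ m * x)%N].

Definition inC1 (p n a : nat) : bool :=
  (a == 0)%N || [exists k : 'I_n.+1, (1 <= k)%N && inPD p (n - k) k 1 a].

Definition sseq (p n i : nat) : bool := inC1 p n (i %% p ^ n).

Local Open Scope ring_scope.
Local Open Scope complex_scope.

Definition omega (R : realType) (M : nat) : R[i] :=
  (cos (2 * pi / M%:R)) +i* (sin (2 * pi / M%:R)).

Definition Spoly (R : realType) (p n : nat) (x : R[i]) : R[i] :=
  \sum_(j < p ^ n) (sseq p n j)%:R * x ^+ j.

Definition gauss_eta (R : realType) (p i : nat) : R[i] :=
  \sum_(x < p | Dset p 1 i x) omega R p ^+ x.
Arguments Spoly R p n x : clear implicits.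
Arguments omega R M : clear implicits.
Arguments gauss_eta R p i : clear implicits.

(* Main.v *)
Require Import Defs.
From HB Require Import structures.
From mathcomp Require Import all_boot all_order all_algebra.
From mathcomp Require Import reals trigo.
From mathcomp Require Import complex.
From mathcomp Require Import finfield.
From mathcomp Require Import zify ring lra.
Import Order.TTheory GRing.Theory Num.Theory.


Section QR.
Variable p : nat.
Hypothesis pr : prime p.
Hypothesis op : odd p.
Local Notation F := 'F_p.

Let p_gt1 : (1 < p)%N := prime_gt1 pr.
Let chF : p \in [pchar F]%R := pchar_Fp pr.

Definition hh := p.-1./2.

Lemma hhE : (hh.*2 = p.-1)%N.
Proof.
have Hp : p = p.-1.+1 by rewrite prednK // prime_gt0.
have := odd_double_half p.-1.
have -> : odd p.-1 = false by move: op; rewrite {1}Hp /= => /negbTE.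
by rewrite add0n.
Qed.

Lemma p_ge3 : (3 <= p)%N.
Proof. by case: p p_gt1 op => [|[|[|]]]. Qed.

Lemma hh_gt0 : (0 < hh)%N.
Proof. have := hhE; have := p_ge3; rewrite -addnn -subn1; lia. Qed.

Lemma hh_lt : (hh < p)%N.
Proof. have := hhE; have := p_ge3; rewrite -addnn -subn1; lia. Qed.

Local Open Scope ring_scope.

Lemma natF_eq0 n : (n%:R == 0 :> F) = (p %| n)%N.
Proof. by rewrite (dvdn_pcharf chF). Qed.

Lemma fermatF (z : F) : z != 0 -> z ^+ p.-1 = 1.
Proof.
move=> z0; have := expf_card z; rewrite card_Fp //.
move=> E; apply: (mulfI z0).
by rewrite -exprS prednK ?prime_gt0 // E mulr1.
Qed.

Definition sqF (z : F) := [exists y : F, y ^+ 2 == z].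

Lemma L_sq1 (z : F) : z != 0 -> (z ^+ hh) ^+ 2 = 1.
Proof. by move=> z0; rewrite -exprM muln2 hhE fermatF. Qed.

Lemma L_pm1 (z : F) : z != 0 -> (z ^+ hh == 1) || (z ^+ hh == -1).
Proof. by move=> z0; rewrite -sqrf_eq1 L_sq1. Qed.

Lemma sq_L (z : F) : sqF z -> z != 0 -> z ^+ hh = 1.
Proof.
move=> /existsP[y /eqP <-] z0.
have y0 : y != 0 by apply: contraNneq z0 => ->; rewrite expr0n.
by rewrite -exprM mul2n hhE fermatF.
Qed.

Lemma card_L : (#|[set z : F | z ^+ hh == 1%R]| <= hh)%N.
Proof.
have := @max_poly_roots F ('X^hh - 1) (enum [set z : F | z ^+ hh == 1%R]).
rewrite size_XnsubC ?hh_gt0 // ltnS -cardE; apply.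
- by rewrite -size_poly_eq0 size_XnsubC ?hh_gt0.
- apply/allP => z; rewrite mem_enum inE => /eqP hz.
  by rewrite rootE !hornerE hz subrr.
- exact: enum_uniq.
Qed.

Lemma card_sq : (hh <= #|[set z : F | (z != 0%R) && sqF z]|)%N.
Proof.
pose f := fun i : 'I_hh => (i.+1%:R : F) ^+ 2.
have nz i : (i < hh)%N -> (i.+1%:R : F) != 0.
  move=> ih; rewrite natF_eq0; apply/negP => /(dvdn_leq (ltn0Sn _)).
  have := hh_lt; lia.
have finj : injective f.
  move=> i j E.
  have E' : ((i.+1%:R : F) - j.+1%:R) * (i.+1%:R + j.+1%:R) = 0.
    by rewrite -subr_sqr; apply/eqP; rewrite subr_eq0; apply/eqP; exact: E.
  move: E' => /eqP; rewrite mulf_eq0 => /orP[].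
    rewrite subr_eq0 => /eqP E2.
    have := etrans (esym (val_Fp_nat pr i.+1)) (etrans (congr1 val E2) (val_Fp_nat pr j.+1)).
    rewrite !modn_small; try (have := hh_lt; have := ltn_ord i; have := ltn_ord j; lia).
    by move=> [] /val_inj.
  move=> E3.
  have : (((i : nat) + j).+2%:R : F) == 0 by rewrite -addnS -addSn natrD.
  rewrite natF_eq0 => /(dvdn_leq (ltn0Sn _)).
  have := hhE; have := ltn_ord i; have := ltn_ord j; have := p_ge3; rewrite -addnn -subn1; lia.
have -> : hh = #|[set f i | i in 'I_hh]| by rewrite card_imset // card_ord.
apply: subset_leq_card; apply/subsetP => z /imsetP[i _ ->]; rewrite inE.
rewrite /f sqrf_eq0 nz //=; by apply/existsP; exists i.+1%:R.
Qed.

Lemma sqF_L (z : F) : z != 0 -> sqF z = (z ^+ hh == 1).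
Proof.
move=> z0.
have /eqP AB : [set z : F | (z != 0%R) && sqF z] == [set z : F | z ^+ hh == 1%R].
  rewrite eqEcard (leq_trans card_L card_sq) andbT.
  by apply/subsetP => y; rewrite !inE => /andP[y0 sy]; rewrite sq_L.
by move/setP: AB => /(_ z); rewrite !inE z0.
Qed.

Lemma oneF_neqN1 : (1 : F) != -1.
Proof.
rewrite -addr_eq0 -[1 + 1]/(2%:R : F) natF_eq0.
apply/negP => /(dvdn_leq (isT : (0 < 2)%N)); have := p_ge3; lia.
Qed.

Lemma sqF_mul (x y : F) : x != 0 -> y != 0 -> sqF (x * y) = (sqF x == sqF y).
Proof.
move=> x0 y0; rewrite !sqF_L ?mulf_neq0 // exprMn.
have h1 := oneF_neqN1; have h2 : (-1 : F) != 1 by rewrite eq_sym.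
case/orP: (L_pm1 x x0) => /eqP ->; case/orP: (L_pm1 y y0) => /eqP ->;
  by rewrite ?mulr1 ?mul1r ?mulrNN ?mulr1 ?eqxx ?(negbTE h1) ?(negbTE h2).
Qed.

Lemma card_sq_eq : #|[set z : F | (z != 0%R) && sqF z]| = hh.
Proof.
apply/eqP; rewrite eqn_leq card_sq andbT.
apply: leq_trans card_L; apply: subset_leq_card; apply/subsetP => y.
by rewrite !inE => /andP[y0 sy]; rewrite sq_L.
Qed.

Lemma card_nsq : #|[set z : F | (z != 0%R) && ~~ sqF z]| = hh.
Proof.
have := cardsID [set z : F | sqF z] [set~ (0 : F)].
rewrite cardsC1 card_Fp // -hhE -addnn.
have -> : [set~ (0:F)] :&: [set z : F | sqF z] = [set z : F | (z != 0%R) && sqF z].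
  by apply/setP => z; rewrite !inE.
have -> : [set~ (0:F)] :\: [set z : F | sqF z] = [set z : F | (z != 0%R) && ~~ sqF z].
  by apply/setP => z; rewrite !inE andbC.
rewrite card_sq_eq; lia.
Qed.



Local Close Scope ring_scope.

Lemma is_sq_modF x : is_sq_mod p x = sqF (x%:R)%R.
Proof.
rewrite /is_sq_mod; apply/existsP/existsP => [[y /eqP Hy]|[y /eqP Hy]].
  exists ((y : nat)%:R)%R; apply/eqP.
  by rewrite -natrX -Fp_nat_mod // Hy Fp_nat_mod.
have yp : (y < p)%N by rewrite -[p in (_ < p)%N](Fp_cast pr) ltn_ord.
exists (Ordinal yp); apply/eqP => /=.
have e0 : (y ^+ 2 : F)%R = (((y : nat) ^ 2)%:R : F)%R by rewrite natrX natr_Zp.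
exact: etrans (esym (val_Fp_nat pr ((y:nat)^2))) (etrans (congr1 val (esym e0)) (etrans (congr1 val Hy) (val_Fp_nat pr x))).
Qed.

Lemma coprime_natF x : coprime x p = ((x%:R : F) != 0)%R.
Proof. by rewrite coprime_sym prime_coprime // natF_eq0. Qed.

Lemma is_sq_mod_mul x y : coprime x p -> coprime y p ->
  is_sq_mod p (x * y) = (is_sq_mod p x == is_sq_mod p y).
Proof.
rewrite !coprime_natF !is_sq_modF natrM => x0 y0.
exact: sqF_mul.
Qed.

Lemma is_sq_mod_mod q x : is_sq_mod q (x %% q) = is_sq_mod q x.
Proof. by rewrite /is_sq_mod modn_mod. Qed.

Definition chi u := coprime u p && ~~ is_sq_mod p u.

Lemma chi_mod u : chi (u %% p) = chi u.
Proof. by rewrite /chi coprime_modl is_sq_mod_mod. Qed.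

Lemma sum_chi : \sum_(u < p) chi u = hh.
Proof.
rewrite -(big_mkord xpredT (fun u => nat_of_bool (chi u))).
have -> : \sum_(0 <= u < p) chi u = \sum_(0 <= u < (Zp_trunc (pdiv p)).+2) chi u
  by rewrite Fp_cast.
rewrite big_mkord -card_nsq cardsE -sum1_card [RHS]big_mkcond /=.
apply: eq_bigr => u _.
rewrite /chi coprime_natF is_sq_modF natr_Zp.
by rewrite unfold_in /=; case: (_ && _).
Qed.

Lemma natF_eqmod m n : ((m%:R : F) == n%:R)%R = (m == n %[mod p]).
Proof.
apply/eqP/eqP => H.
  exact: etrans (esym (val_Fp_nat pr m)) (etrans (congr1 val H) (val_Fp_nat pr n)).
by rewrite -(Fp_nat_mod pr m) H Fp_nat_mod.
Qed.

Lemma sq_lift x r : coprime x p -> 0 < r ->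
  (exists y, y ^ 2 = x %[mod p ^ r]) -> exists y, y ^ 2 = x %[mod p ^ r.+1].
Proof.
move=> cx r0 [y Hy].
set P := p ^ r.
have dpP : p %| P by rewrite /P -{1}(expn1 p) dvdn_exp2l.
have Hyp : y ^ 2 = x %[mod p] by rewrite -(modn_dvdm (y ^ 2) dpP) Hy modn_dvdm.
have cy : coprime y p.
  by rewrite -(@coprime_pexpl 2 y p isT) -coprime_modl Hyp coprime_modl.
have c2y : coprime (2 * y) p by rewrite coprimeMl coprime2n op cy.
set a1 := y ^ 2 %/ P; set b1 := x %/ P; set c := x %% P.
have eA : y ^ 2 = a1 * P + c by rewrite /c -Hy -divn_eq.
have eB : x = b1 * P + c by exact: divn_eq.
pose t := val (((b1%:R - a1%:R) / (2 * y)%:R : F)%R).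
have ht : a1 + 2 * y * t = b1 %[mod p].
  apply/eqP; rewrite -natF_eqmod natrD natrM /t natr_Zp.
  rewrite mulrC divfK; last by rewrite -coprime_natF.
  by rewrite addrC subrK.
exists (y + t * P).
rewrite [p ^ r.+1]expnS -/P sqrnD.
have dv : p * P %| (t * P) ^ 2.
  by rewrite expnMn dvdn_mull // -mulnn dvdn_mul.
move/dvdnP: dv => [k ek].
rewrite ek eA.
have -> : a1 * P + c + k * (p * P) + 2 * (y * (t * P)) =
          k * (p * P) + ((a1 + 2 * y * t) * P + c) by ring.
rewrite modnMDl {1}eB -modnDml -muln_modl ht muln_modl modnDml //.
Qed.

Lemma sq_pow k x : 0 < k -> coprime x p -> is_sq_mod (p ^ k) x = is_sq_mod p x.
Proof.
move=> k0 cx; have pk : 0 < p ^ k by rewrite expn_gt0 prime_gt0.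
have dp : p %| p ^ k by rewrite -{1}(expn1 p) dvdn_exp2l.
apply/idP/idP.
  case/existsP => y /eqP Hy; apply/existsP.
  exists (Ordinal (ltn_pmod y (prime_gt0 pr))); apply/eqP => /=.
  by rewrite modnXm -(modn_dvdm (y ^ 2) dp) Hy modn_dvdm.
move=> Hs.
have : exists y, y ^ 2 = x %[mod p ^ k].
  elim: k k0 {pk dp} => [//|k IH] _.
  case: k IH => [|k] IH.
    by case/existsP: Hs => y /eqP Hy; exists y; rewrite expn1.
  by apply: sq_lift => //; exact: IH.
case=> y Hy; apply/existsP; exists (Ordinal (ltn_pmod y pk)); apply/eqP => /=.
by rewrite modnXm.
Qed.

End QR.

Section Om.
Variable R : realType.
Local Open Scope ring_scope.
Local Open Scope complex_scope.

Lemma cmulE (a b c d : R) : (a +i* b) * (c +i* d) = (a*c - b*d) +i* (a*d + b*c).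
Proof. by []. Qed.

Lemma omegaX (M j : nat) : omega R M ^+ j =
  cos (j%:R * (2 * pi / M%:R)) +i* sin (j%:R * (2 * pi / M%:R)).
Proof.
rewrite /omega; set t := 2 * pi / M%:R.
elim: j => [|j IH].
  by rewrite expr0 !mul0r cos0 sin0.
rewrite exprS IH cmulE.
have -> : j.+1%:R = 1 + j%:R :> R by rewrite mulrS.
rewrite mulrDl mul1r cosD sinD.
congr (_ +i* _); ring.
Qed.

Lemma omegaM (M d : nat) : (0 < M)%N -> (0 < d)%N ->
  omega R (M * d) ^+ d = omega R M.
Proof.
move=> M0 d0; rewrite omegaX /omega; congr (cos _ +i* sin _);
rewrite natrM; field; by rewrite !pnatr_eq0 -!lt0n M0 d0.
Qed.

Lemma omegaN (M : nat) : (0 < M)%N -> omega R M ^+ M = 1.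
Proof.
move=> M0; rewrite omegaX.
have -> : M%:R * (2 * pi / M%:R) = pi *+ 2 :> R.
  by rewrite mulr2n; field; rewrite pnatr_eq0 -lt0n.
by rewrite cos2pi sin2pi.
Qed.

Lemma cos_eq1_02pi (x : R) : 0 < x < pi *+ 2 -> cos x != 1.
Proof.
move=> /andP[x0 x2]; apply/eqP => cx.
have pi0 := @pi_gt0 R.
case: (lerP x pi) => xpi.
  have := @cos_inj R x 0; rewrite cx cos0 !in_itv /= (ltW x0) xpi lexx (ltW pi0).
  by move=> /(_ isT isT erefl) x00; move: x0; rewrite x00 ltxx.
have := @cos_inj R (pi *+ 2 - x) 0.
rewrite cos0 cosB cos2pi sin2pi cx mul0r addr0 mulr1 !in_itv /= lexx (ltW pi0).
have -> : (0 <= pi *+ 2 - x) by rewrite subr_ge0 ltW.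
have -> : (pi *+ 2 - x <= pi) by rewrite mulr2n; lra.
move=> /(_ isT isT erefl) /eqP; rewrite subr_eq0 => /eqP ex.
by move: x2; rewrite ex ltxx.
Qed.

Lemma omega_neq1 (M c : nat) : (0 < c < M)%N -> omega R M ^+ c != 1.
Proof.
move=> /andP[c0 cM]; rewrite omegaX; apply/negP => /eqP [] /eqP cx _; move: cx; apply/negP.
apply: cos_eq1_02pi.
have M0 : (0 < M)%N by apply: leq_trans cM.
have Mr : 0 < M%:R :> R by rewrite ltr0n.
have pi0 := @pi_gt0 R.
apply/andP; split.
  by rewrite mulr_gt0 ?ltr0n // divr_gt0 // mulr_gt0.
rewrite mulrA ltr_pdivrMr // mulr2n.
have : c%:R < M%:R :> R by rewrite ltr_nat.
nra.
Qed.

End Om.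


Section Main.
Variable R : realType.
Variable p : nat.
Hypothesis pr : prime p.
Hypothesis op : odd p.

Let p0 : 0 < p := prime_gt0 pr.
Let p1 : 1 < p := prime_gt1 pr.
Let pX k : 0 < p ^ k. Proof. by rewrite expn_gt0 p0. Qed.

Definition chik k u := coprime u p && ~~ is_sq_mod (p ^ k) u.

Lemma chikE k u : 0 < k -> chik k u = chi p u.
Proof.
move=> k0; rewrite /chik /chi; case cu: (coprime u p) => //=.
by rewrite sq_pow.
Qed.

Lemma inC1_rec n j : j < p ^ n.+1 ->
  inC1 p n.+1 j = ((p %| j) && inC1 p n (j %/ p)) || chik n.+1 j.
Proof.
move=> jlt.
case dj: (p %| j) => /=.
  have -> : chik n.+1 j = false.
    by rewrite /chik coprime_sym prime_coprime // dj.
  rewrite orbF.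
  move: (dj) => /dvdnP [q ->]; rewrite mulnK //.
  rewrite /inC1 muln_eq0 (negbTE (lt0n_neq0 p0)) orbF.
  congr (_ || _); apply/existsP/existsP.
    move=> [k /andP[k1 /existsP[x /andP[/and3P[xlt cx ns] /eqP E]]]].
    have kn : k <= n.
      rewrite -ltnS; rewrite ltn_neqAle -ltnS ltn_ord andbT.
      apply/negP => /eqP kE; have e0 : n.+1 - k = 0 by rewrite kE subnn.
      move: E cx; rewrite e0 expn0 mul1n => <-.
      by rewrite coprimeMl (prime_coprime _ pr) dvdnn andbF.
    exists (Ordinal (kn : k < n.+1)); rewrite /= k1 /=.
    apply/existsP; exists x; rewrite /Dset xlt cx ns /=.
    move: E; rewrite subSn // expnS -mulnA [p * _]mulnC => /eqP.
    by rewrite (eqn_pmul2r p0).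
  move=> [k /andP[k1 /existsP[x /andP[/and3P[xlt cx ns] /eqP E]]]].
  have kn : k < n.+2 by rewrite ltnS ltnW.
  exists (Ordinal kn); rewrite /= k1 /=.
  apply/existsP; exists x; rewrite /Dset xlt cx ns /=.
  have kn2 : k <= n by rewrite -ltnS ltn_ord.
  by apply/eqP; rewrite subSn // expnS E; ring.
rewrite ?andFb /=.
rewrite /inC1.
have -> : (j == 0) = false by apply/negbTE; apply: contraFN dj => /eqP ->.
rewrite /=; apply/existsP/idP.
  move=> [k /andP[k1 /existsP[x /andP[/and3P[xlt cx ns] /eqP E]]]].
  case e: (n.+1 - k) E => [|d] E.
    have kE : (k : nat) = n.+1 by move: e (ltn_ord k); lia.
    have hs : forall a, is_sq_mod (p ^ k) a = is_sq_mod (p ^ n.+1) a by move=> a; rewrite kE.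
    by move: E; rewrite expn0 mul1n => ->; rewrite /chik cx -hs ns.
  by move: dj; rewrite E expnS -mulnA dvdn_mulr.
move=> ch.
exists (@ord_max n.+1); rewrite /=.
apply/existsP; exists (Ordinal jlt); rewrite /Dset /= jlt subnn expn0 mul1n eqxx andbT.
by move: ch; rewrite /chik.
Qed.

Local Open Scope ring_scope.
Local Open Scope complex_scope.

Lemma split_sum (G : nat -> R[i]) m d :
  \sum_(0 <= j < (m * d)%N) G j = \sum_(0 <= q < m) \sum_(0 <= r < d) G (q * d + r)%N.
Proof.
rewrite big_nat_mul; apply: eq_bigr => q _.
have -> : \sum_(q * d <= j < q.+1 * d) G j = \sum_(0 + q * d <= j < q.+1 * d) G j
  by rewrite add0n.
rewrite big_addn mulSnr addKn.
by apply: eq_bigr => r _; rewrite addnC.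
Qed.

Definition om k := omega R (p ^ k).

Lemma om_pow k e : om k ^+ (p ^ k * e) = 1.
Proof. by rewrite exprM omegaN ?pX // expr1n. Qed.

Lemma om_mod k e : om k ^+ e = om k ^+ (e %% p ^ k).
Proof.
by rewrite {1}(divn_eq e (p ^ k)) exprD mulnC om_pow mul1r.
Qed.

Lemma om_down k m e : (m <= k)%N -> om k ^+ (p ^ m * e) = om (k - m) ^+ e.
Proof.
move=> mk; rewrite exprM /om.
have -> : (p ^ k = p ^ (k - m) * p ^ m)%N by rewrite -expnD subnK.
by rewrite omegaM ?pX.
Qed.

Definition Sn n a := \sum_(0 <= j < p ^ n) (inC1 p n j)%:R * om n ^+ (a * j).
Definition U k a := \sum_(0 <= u < p ^ k) (chik k u)%:R * om k ^+ (a * u).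

Lemma Spoly_Sn n a : Spoly R p n (om n ^+ a) = Sn n a.
Proof.
rewrite /Spoly /Sn big_mkord; apply: eq_bigr => j _.
by rewrite /sseq modn_small // -exprM.
Qed.

Lemma Sn_rec n a : Sn n.+1 a = Sn n a + U n.+1 a.
Proof.
rewrite /Sn /U.
transitivity (\sum_(0 <= j < p ^ n.+1)
   (((p %| j)%N && inC1 p n (j %/ p))%:R * om n.+1 ^+ (a * j)
    + (chik n.+1 j)%:R * om n.+1 ^+ (a * j))).
  apply: eq_big_nat => j /andP[_ jlt]; rewrite inC1_rec // -mulrDl.
  congr (_ * _).
  case dj: (p %| j)%N; case cj: (chik n.+1 j) => //=.
    by move: cj; rewrite /chik coprime_sym prime_coprime // dj.
  by rewrite orbF addr0.
  by rewrite add0r.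
  by rewrite addr0.
rewrite big_split /=; congr (_ + _).
rewrite expnSr split_sum; apply: eq_bigr => q _.
rewrite big_ltn // addn0 dvdn_mull // mulnK //= big1_seq ?addr0.
  have -> : (a * (q * p) = p ^ 1 * (a * q))%N by rewrite expn1; ring.
  by rewrite om_down // subn1.
move=> r /andP[_]; rewrite mem_index_iota => /andP[r1 rp].
have -> : (p %| q * p + r)%N = false.
  rewrite dvdn_addr ?dvdn_mull //; apply/negP => /(dvdn_leq r1); lia.
by rewrite mul0r.
Qed.

Lemma chi_shift q P r : (p %| P)%N -> chi p (q * P + r) = chi p r.
Proof.
move=> dP; rewrite -chi_mod -modnDml (eqP (dvdn_mull q dP)) add0n chi_mod //.
Qed.

Lemma sum_chiR : \sum_(0 <= r < p) (chi p r)%:R = (hh p)%:R :> R[i].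
Proof. by rewrite -natr_sum big_mkord sum_chi. Qed.

Lemma U_low k m x : (0 < k)%N -> (k <= m)%N -> U k (p ^ m * x) = (p ^ k.-1 * hh p)%:R.
Proof.
move=> k0 km; rewrite /U.
transitivity (\sum_(0 <= u < p ^ k) (chi p u)%:R : R[i]).
  apply: eq_bigr => u _; rewrite chikE //.
  have -> : (p ^ m * x * u = p ^ k * (p ^ (m - k) * x * u))%N.
    by rewrite !mulnA -expnD subnKC.
  by rewrite om_pow mulr1.
have -> : (p ^ k = p ^ k.-1 * p)%N by rewrite -expnSr prednK.
rewrite split_sum.
transitivity (\sum_(0 <= q < p ^ k.-1) (hh p)%:R : R[i]).
  apply: eq_bigr => q _; rewrite -sum_chiR; apply: eq_bigr => r _.
  by rewrite chi_shift.
by rewrite sumr_const_nat subn0 natrM mulr_natl.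
Qed.

Definition G r x := \sum_(0 <= u < p ^ r) (chi p u)%:R * om r ^+ (x * u).

Lemma U_high k m x : (m < k)%N -> U k (p ^ m * x) = (p ^ m)%:R * G (k - m) x.
Proof.
move=> mk; rewrite /U.
have km0 : (0 < k - m)%N by rewrite subn_gt0.
have dP : (p %| p ^ (k - m))%N by rewrite -{1}(expn1 p) dvdn_exp2l.
transitivity (\sum_(0 <= u < p ^ k) (chi p u)%:R * om (k - m) ^+ (x * u)).
  apply: eq_bigr => u _; rewrite chikE ?(leq_ltn_trans _ mk) //.
  by rewrite -mulnA om_down // ltnW.
have -> : (p ^ k = p ^ m * p ^ (k - m))%N by rewrite -expnD subnKC // ltnW.
rewrite split_sum.
transitivity (\sum_(0 <= q < p ^ m) G (k - m) x).
  apply: eq_bigr => q _; apply: eq_bigr => r _.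
  rewrite chi_shift // mulnDr exprD.
  have -> : (x * (q * p ^ (k - m)) = p ^ (k - m) * (x * q))%N by ring.
  by rewrite om_pow mul1r.
by rewrite sumr_const_nat subn0 mulr_natl.
Qed.

Lemma coprime_mod_gt0 x : coprime x p -> (0 < x %% p)%N.
Proof.
move=> cx; rewrite lt0n; apply/negP => /eqP e.
by move: cx; rewrite -coprime_modl e /coprime gcd0n => /eqP p1E; move: p1; rewrite p1E.
Qed.

Lemma geo0 x : coprime x p -> \sum_(0 <= q < p) om 1 ^+ (x * q) = 0.
Proof.
move=> cx.
set w := om 1 ^+ x.
have w1 : w != 1.
  rewrite /w om_mod expn1 /om expn1; apply: omega_neq1.
  by rewrite coprime_mod_gt0 // ltn_pmod.
have wp : w ^+ p = 1 by rewrite /w -exprM mulnC -{1}(expn1 p) om_pow.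
have := subrX1 w p; rewrite wp subrr => /esym /eqP; rewrite mulf_eq0 subr_eq0 (negbTE w1) /=.
rewrite -(big_mkord xpredT (fun i => w ^+ i)) => /eqP S0.
rewrite -[RHS]S0; apply: eq_big_nat => q _; by rewrite /w exprM.
Qed.

Lemma G_vanish r x : (1 < r)%N -> coprime x p -> G r x = 0.
Proof.
move=> r1 cx; rewrite /G.
have r0 : (0 < r.-1)%N by rewrite -ltnS prednK // ltnW.
have dP : (p %| p ^ r.-1)%N by rewrite -{1}(expn1 p) dvdn_exp2l.
have -> : (p ^ r = p * p ^ r.-1)%N by rewrite -expnS prednK // ltnW.
rewrite split_sum.
transitivity (\sum_(0 <= q < p)
   (\sum_(0 <= s < p ^ r.-1) (chi p s)%:R * om r ^+ (x * s)) * om 1 ^+ (x * q)).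
  apply: eq_bigr => q _; rewrite big_distrl /=; apply: eq_bigr => s _.
  rewrite chi_shift // mulnDr exprD -mulrA [om r ^+ _ * _]mulrC.
  congr (_ * (_ * _)).
  rewrite [(q * _)%N]mulnC mulnCA om_down; last by rewrite -ltnS prednK // ltnW.
  by rewrite -{1}(prednK (ltnW r1)) subSnn.
by rewrite -big_distrr /= geo0 // mulr0.
Qed.

Lemma G_one x : coprime x p ->
  G 1 x = gauss_eta R p (if is_sq_mod p x then 1 else 0).
Proof.
move=> cx; rewrite /G /gauss_eta.
have -> : \sum_(0 <= u < p ^ 1) (chi p u)%:R * om 1 ^+ (x * u)
        = \sum_(u < p) (chi p u)%:R * omega R p ^+ (x * u).
  by rewrite expn1 big_mkord /om expn1.
rewrite [RHS]big_mkcond /=.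
pose h := fun u : 'I_p => Ordinal (ltn_pmod (x * u) p0).
have x0 : (x%:R : 'F_p) != 0 by rewrite -(coprime_natF p pr).
have hinj : injective h.
  move=> u v /(congr1 val) /= /eqP; rewrite -(natF_eqmod p pr) !natrM => /eqP E.
  move: (mulfI x0 E) => /eqP; rewrite natF_eqmod // !modn_small // => /eqP.
  exact: val_inj.
rewrite [RHS](reindex_inj hinj) /=.
have wm e : omega R p ^+ e = omega R p ^+ (e %% p).
  by have := om_mod 1 e; rewrite /om expn1.
apply: eq_bigr => u _.
rewrite /Dset expn1 ltn_pmod // coprime_modl is_sq_mod_mod -wm coprimeMl cx /chi /=.
case cu: (coprime u p) => /=; last by rewrite mul0r.
rewrite is_sq_mod_mul //.
by case: (is_sq_mod p x); case: (is_sq_mod p u) => /=; rewrite ?mul1r ?mul0r.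
Qed.

Definition Res n m b : R[i] := if (n <= m)%N then ((p ^ n)%:R + 1) / 2%:R
  else ((p ^ m)%:R + 1) / 2%:R + (p ^ m)%:R * gauss_eta R p (if b then 1 else 0).

Lemma two_neq0 : (2%:R : R[i]) != 0.
Proof. by rewrite pnatr_eq0. Qed.

Lemma pE : (p%:R : R[i]) = 2%:R * (hh p)%:R + 1.
Proof.
have : p = ((hh p).*2).+1 by rewrite hhE // prednK.
by move=> {1}->; rewrite -muln2 -addn1 natrD natrM mulrC.
Qed.

Lemma Sn_closed x m n : coprime x p -> Sn n (p ^ m * x) = Res n m (is_sq_mod p x).
Proof.
move=> cx; elim: n => [|n IH].
  rewrite /Sn /Res leq0n expn0 big_nat1 /inC1 eqxx /= mul1r muln0 expr0.
  by rewrite divff // two_neq0.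
rewrite Sn_rec IH /Res.
case: (leqP n.+1 m) => h1.
  rewrite (ltnW h1) U_low //= expnSr !natrM pE.
  by field.
case: (ltnP m n) => h2.
  rewrite /= U_high // G_vanish // ?mulr0 ?addr0 //.
  by rewrite ltn_subRL addn1 ltnS.
have mn : m = n by apply/eqP; rewrite eqn_leq h2 -ltnS h1.
by rewrite /= mn U_high // subSnn G_one.
Qed.

End Main.

Local Open Scope ring_scope.
Local Open Scope complex_scope.

Theorem mainTheorem2 (R : realType) (p n : nat) :
  prime p -> odd p -> (0 < n)%N ->
  forall a : nat, (a < p ^ n)%N ->
    (a = 0%N ->
       Spoly R p n (omega R (p ^ n) ^+ a) = ((p ^ n)%:R + 1) / 2%:R) /\
    (forall m : nat, (m < n)%N -> inPD p m (n - m) 0 a ->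
       Spoly R p n (omega R (p ^ n) ^+ a)
       = ((p ^ m)%:R + 1) / 2%:R + (p ^ m)%:R * gauss_eta R p 1) /\
    (forall m : nat, (m < n)%N -> inPD p m (n - m) 1 a ->
       Spoly R p n (omega R (p ^ n) ^+ a)
       = ((p ^ m)%:R + 1) / 2%:R + (p ^ m)%:R * gauss_eta R p 0).
Proof.
move=> pr op n0 a alt.
have SS b : Spoly R p n (omega R (p ^ n) ^+ b) = Sn R p n b.
  exact: (Spoly_Sn R p n b).
split; [|split].
- move=> ->; rewrite SS.
  have -> : Sn R p n 0 = Sn R p n (p ^ n * 1).
    rewrite /Sn; apply: eq_bigr => j _.
    by rewrite mul0n expr0 -(om_pow R p pr n j) muln1.
  by rewrite (Sn_closed R p pr op 1 n n) ?coprime1n // /Res leqnn.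
- move=> m mn /existsP[x /andP[/and3P[xlt cx sq] /eqP ->]].
  have nm0 : (0 < n - m)%N by rewrite subn_gt0.
  move: sq; rewrite /= (sq_pow p pr op) // => sq.
  by rewrite SS (Sn_closed R p pr op) // /Res leqNgt mn /= sq.
- move=> m mn /existsP[x /andP[/and3P[xlt cx sq] /eqP ->]].
  have nm0 : (0 < n - m)%N by rewrite subn_gt0.
  move: sq; rewrite /= (sq_pow p pr op) // => sq.
  by rewrite SS (Sn_closed R p pr op) // /Res leqNgt mn /= (negbTE sq).
Qed.
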